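(* Let $\pi,\sigma$ be formal Poisson deformations of $\pi_0,\sigma_0$, let $k\ge0$, $X_{(k)}\in\lambda\mathrm{Der}(\mathcal{B})[[\lambda]]$ and $\Phi_{(k)}=\exp(X_{(k)})$, and suppose that for all $a_1,a_2\in\mathcal{A}$, $\Phi_{(k)}^{-1}\sigma(\Phi_{(k)}\phi_0(a_1),\Phi_{(k)}\phi_0(a_2))=\phi_0(\pi(a_1,a_2))+\lambda^{k+1}R_{k+1}(a_1,a_2)+O(\lambda^{k+2})$ for a bilinear map $R_{k+1}:\mathcal{A}\times\mathcal{A}\to\mathcal{B}$. Then $R_{k+1}$ is a $2$-cocycle in $C^\bullet_{\mathrm{CE,der}}(\mathcal{A},\mathcal{B})$.
   Context: $\mathbb{K}$ is a field of characteristic zero. $\mathcal{A},\mathcal{B}$ are commutative $\mathbb{K}$-algebras with Poisson brackets $\pi_0=\{\cdot,\cdot\}_{\mathcal{A}}$, $\sigma_0=\{\cdot,\cdot\}_{\mathcal{B}}$, and $\phi_0:\mathcal{A}\to\mathcal{B}$ is a Poisson morphism (extended $\lambda$-linearly). A formal Poisson deformation of $\pi_0$ is a $\mathbb{K}[[\lambda]]$-bilinear Poisson bracket on $\mathcal{A}[[\lambda]]$ with zeroth-order term $\pi_0$. $\exp(X)=\sum_nX^n/n!$ for $X\in\lambda\mathrm{Der}(\mathcal{B})[[\lambda]]$. Chevalley–Eilenberg complex: $C^0_{\mathrm{CE}}(\mathcal{A},\mathcal{B})=\mathcal{B}$, $C^k_{\mathrm{CE}}$ = $k$-linear antisymmetric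 maps $\mathcal{A}^k\to\mathcal{B}$, $(\delta D)(a_0,\dots,a_k)=\sum_j(-1)^j\{\phi_0(a_j),D(\dots,\widehat{a_j},\dots)\}_{\mathcal{B}}+\sum_{i<j}(-1)^{i+j}D(\{a_i,a_j\}_{\mathcal{A}},\dots,\widehat{a_i},\dots,\widehat{a_j},\dots)$; $C^\bullet_{\mathrm{CE,der}}(\mathcal{A},\mathcal{B})$ is the subcomplex of cochains that are derivations along $\phi_0$ in each argument, i.e. $D(\dots,aa',\dots)=\phi_0(a)D(\dots,a',\dots)+D(\dots,a,\dots)\phi_0(a')$. *)

(* Defs.v *)
From HB Require Import structures.
From mathcomp Require Import all_boot all_order all_algebra.
Set Implicit Arguments. Unset Strict Implicit. Unset Printing Implicit Defensive.
Import Order.TTheory GRing.Theory Num.Theory.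
Local Open Scope ring_scope.

Section Defs.
Variable K : fieldType.

(* Formal power series T[[lambda]] as coefficient sequences. *)
Definition ser (T : Type) := nat -> T.

Definition cstS (T : comAlgType K) (b : T) : ser T :=
  fun n => if n is 0 then b else 0.

Definition mulS (T : comAlgType K) (f g : ser T) : ser T :=
  fun n => \sum_(i < n.+1) f i * g (n - i)%N.

Definition bilinearK (U V : comAlgType K) (p : U -> U -> V) : Prop :=
  (forall (c : K) x y z, p (c *: x + y) z = c *: p x z + p y z) /\
  (forall (c : K) x y z, p z (c *: x + y) = c *: p z x + p z y).

Definition is_poisson (T : comAlgType K) (p : T -> T -> T) : Prop :=
  [/\ bilinearK p,
      (forall a b, p a b = - p b a),
      (forall a b c, p (a * b) c = a * p b c + p a c * b) &
      (forall a b c, p (p a b) c + p (p b c) a + p (p c a) b = 0)].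

(* The K[[lambda]]-bilinear bracket sum_n lambda^n p_n on T[[lambda]] *)
Definition extS (T : comAlgType K) (p : nat -> T -> T -> T) (f g : ser T) : ser T :=
  fun n => \sum_(i < n.+1) \sum_(j < (n - i).+1) p i (f j) (g (n - i - j)%N).

Definition formal_poisson_deformation (T : comAlgType K)
    (p0 : T -> T -> T) (p : nat -> T -> T -> T) : Prop :=
  [/\ (forall a b, p 0%N a b = p0 a b),
      (forall n, bilinearK (p n)),
      (forall f g n, extS p f g n = - extS p g f n),
      (forall f g h n, extS p (mulS f g) h n
                       = mulS f (extS p g h) n + mulS (extS p f h) g n) &
      (forall f g h n, extS p (extS p f g) h n + extS p (extS p g h) f n
                       + extS p (extS p h f) g n = 0)].

Definition is_der (T : comAlgType K) (D : T -> T) : Prop :=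
  (forall (c : K) x y, D (c *: x + y) = c *: D x + D y) /\
  (forall x y, D (x * y) = x * D y + D x * y).

(* X = sum_n lambda^n X_n in lambda Der(T)[[lambda]] *)
Definition lambda_der (T : comAlgType K) (X : nat -> T -> T) : Prop :=
  (forall x, X 0%N x = 0) /\ (forall n, is_der (X n)).

Definition actS (T : comAlgType K) (X : nat -> T -> T) (f : ser T) : ser T :=
  fun n => \sum_(i < n.+1) X i (f (n - i)%N).

(* exp(X) = sum_m X^m / m!; since X_0 = 0, X^m f has order >= m, so the
   coefficient of lambda^n only receives contributions from m <= n. *)
Definition expS (T : comAlgType K) (X : nat -> T -> T) (f : ser T) : ser T :=
  fun n => \sum_(m < n.+1) (m`!%:R : K)^-1 *: iter m (actS X) f n.

Definition CE2_der (A B : comAlgType K) (phi0 : A -> B) (D : A -> A -> B) : Prop :=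
  [/\ bilinearK D,
      (forall a b, D a b = - D b a),
      (forall a a' b, D (a * a') b = phi0 a * D a' b + D a b * phi0 a') &
      (forall a a' b, D b (a * a') = phi0 a * D b a' + D b a * phi0 a')].

Definition CE_delta2 (A B : comAlgType K) (piA : A -> A -> A) (sigB : B -> B -> B)
    (phi0 : A -> B) (D : A -> A -> B) (a0 a1 a2 : A) : B :=
  sigB (phi0 a0) (D a1 a2) - sigB (phi0 a1) (D a0 a2) + sigB (phi0 a2) (D a0 a1)
  - D (piA a0 a1) a2 + D (piA a0 a2) a1 - D (piA a1 a2) a0.

Definition CE_der_2cocycle (A B : comAlgType K) (piA : A -> A -> A) (sigB : B -> B -> B)
    (phi0 : A -> B) (D : A -> A -> B) : Prop :=
  CE2_der phi0 D /\ (forall a0 a1 a2, CE_delta2 piA sigB phi0 D a0 a1 a2 = 0).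

End Defs.

(* Main.v *)
Require Import Defs.
From HB Require Import structures.
From mathcomp Require Import all_boot all_order all_algebra.
From mathcomp Require Import ring zify.
From Stdlib Require Import FunctionalExtensionality.
Import Order.TTheory GRing.Theory Num.Theory.
Local Open Scope ring_scope.
Set Implicit Arguments. Unset Strict Implicit.

Section Comb.
Variable V : zmodType.

Lemma sum_bnd (a b : nat) (F : nat -> V) : a = b ->
  \sum_(j < a) F j = \sum_(j < b) F j.
Proof. by move->. Qed.

Lemma sum_ext (a b : nat) (F : nat -> V) : (a <= b)%N ->
  (forall j, (a <= j)%N -> F j = 0) ->
  \sum_(j < a) F j = \sum_(j < b) F j.
Proof.
move=> ab H; rewrite (big_ord_widen b F ab) big_mkcond.
apply: eq_bigr => j _; case: ifP => // /negbT; rewrite -leqNgt => /H ->.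
by [].
Qed.

Lemma sumSl n (F : nat -> V) : \sum_(j < n.+1) F j = F 0%N + \sum_(j < n) F j.+1.
Proof. by rewrite big_ord_recl; congr (_ + _); apply: eq_bigr => j _; rewrite lift0. Qed.
Lemma sumSr n (F : nat -> V) : \sum_(j < n.+1) F j = \sum_(j < n) F j + F n.
Proof. by rewrite big_ord_recr. Qed.

Lemma TR n (F : nat -> nat -> V) :
  \sum_(m < n.+1) \sum_(p < m.+1) F p (m - p)%N
  = \sum_(p < n.+1) \sum_(q < (n - p).+1) F p q.
Proof.
elim: n => [|n IH]; first by rewrite !big_ord1.
rewrite big_ord_recr /= IH.
under [RHS]eq_bigr => p _ do rewrite big_ord_recr /=.
rewrite big_split /=; congr (_ + _).
rewrite [RHS]big_ord_recr /= subnn big_ord0 addr0.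
apply: eq_bigr => p _ /=.
by apply: sum_bnd; rewrite subSn // -ltnS.
Qed.

Lemma SQ n (F : nat -> nat -> V) :
  \sum_(i < n.+1) \sum_(j < (n - i).+1) F i j
  = \sum_(i < n.+1) \sum_(j < n.+1 | (i + j <= n)%N) F i j.
Proof.
apply: eq_bigr => i _.
rewrite (big_ord_widen n.+1 (F i)); last by rewrite ltnS leq_subr.
apply: eq_bigl => j; have := ltn_ord i => ?; apply/idP/idP => ?; lia.
Qed.

Lemma SW n (F : nat -> nat -> V) :
  \sum_(i < n.+1) \sum_(j < (n - i).+1) F i j
  = \sum_(j < n.+1) \sum_(i < (n - j).+1) F i j.
Proof.
rewrite SQ (SQ n (fun j i => F i j)).
under eq_bigr do rewrite big_mkcond.
rewrite exchange_big; apply: eq_bigr => j _; rewrite [RHS]big_mkcond.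
by apply: eq_bigr => i _; rewrite addnC.
Qed.

Lemma CA n (F : nat -> nat -> nat -> V) :
  \sum_(i < n.+1) \sum_(j < (n - i).+1) F i j (n - i - j)%N
  = \sum_(l < n.+1) \sum_(i < l.+1) F i (l - i)%N (n - l)%N.
Proof.
rewrite -(TR n (fun p q => F p q (n - p - q)%N)).
apply: eq_bigr => l _; apply: eq_bigr => i _; congr F.
have := ltn_ord i; have := ltn_ord l; lia.
Qed.

Lemma PASCAL m (a : nat -> V) :
  \sum_(p < m.+1) (a p.+1 *+ 'C(m, p) + a p *+ 'C(m, p))
  = \sum_(p < m.+2) a p *+ 'C(m.+1, p).
Proof.
rewrite big_split /= [RHS]big_ord_recl.
under [X in _ = _ + X]eq_bigr => p _ do rewrite lift0 binS mulrnDr.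
rewrite big_split /= [X in _ + X]big_ord_recl.
under [X in _ + (_ + X)]eq_bigr => p _ do rewrite lift0.
rewrite [\sum_(i < m.+1) a i.+1 *+ 'C(m, i.+1)]big_ord_recr /= (bin_small (ltnSn m)) mulr0n addr0.
by rewrite !bin0 addrCA [X in _ = _ + X]addrC.
Qed.

End Comb.

Section Bil.
Variable K : fieldType.
Variables T U : comAlgType K.

Lemma bil_addl (p : T -> T -> U) : bilinearK p -> forall x y z, p (x + y) z = p x z + p y z.
Proof. by case=> H _ x y z; rewrite -[x]scale1r H !scale1r. Qed.
Lemma bil_addr (p : T -> T -> U) : bilinearK p -> forall x y z, p z (x + y) = p z x + p z y.
Proof. by case=> _ H x y z; rewrite -[x]scale1r H !scale1r. Qed.
Lemma bil_0l (p : T -> T -> U) : bilinearK p -> forall z, p 0 z = 0.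
Proof. by case=> H _ z; rewrite -(addNr z) -scaleN1r H scaleN1r addNr. Qed.
Lemma bil_0r (p : T -> T -> U) : bilinearK p -> forall z, p z 0 = 0.
Proof. by case=> _ H z; rewrite -(addNr z) -scaleN1r H scaleN1r addNr. Qed.
Lemma bil_Nl (p : T -> T -> U) : bilinearK p -> forall x z, p (- x) z = - p x z.
Proof.
move=> Hb x z; have [H _] := Hb.
by rewrite -(addr0 (- x)) -scaleN1r H scaleN1r (bil_0l Hb) addr0.
Qed.
Lemma bil_Nr (p : T -> T -> U) : bilinearK p -> forall x z, p z (- x) = - p z x.
Proof.
move=> Hb x z; have [_ H] := Hb.
by rewrite -(addr0 (- x)) -scaleN1r H scaleN1r (bil_0r Hb) addr0.
Qed.
End Bil.

Section Ser.
Variable K : fieldType.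
Variable T : comAlgType K.
Implicit Types f g h : ser T.

Definition addS f g : ser T := fun n => f n + g n.
Definition oppS f : ser T := fun n => - f n.
Definition zS : ser T := fun _ => 0.
Definition sh f : ser T := fun n => if n is m.+1 then f m else 0.
Definition tl f : ser T := fun n => f n.+1.

Lemma ser_dec f : f = addS (cstS (f 0%N)) (sh (tl f)).
Proof. by apply: functional_extensionality => -[|n]; rewrite /addS /= ?addr0 ?add0r. Qed.

Lemma mulS_cstl (a : T) f n : mulS (cstS a) f n = a * f n.
Proof.
rewrite /mulS big_ord_recl subn0 big1 ?addr0 // => i _.
by rewrite lift0 /= mul0r.
Qed.

Lemma mulS_cstr (a : T) f n : mulS f (cstS a) n = f n * a.
Proof.
rewrite /mulS big_ord_recr /= subnn /= big1 ?add0r // => i _ /=.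
have := ltn_ord i; case E: (n - i)%N => [|m] /=; first lia.
by rewrite mulr0.
Qed.

Lemma mulS_cst (a b : T) : mulS (cstS a) (cstS b) = cstS (a * b).
Proof.
by apply: functional_extensionality => n; rewrite mulS_cstl; case: n => [|n] /=; rewrite ?mulr0.
Qed.

Variable p : nat -> T -> T -> T.
Hypothesis Hp : forall n, bilinearK (p n).

Lemma extS_addl f f' g n : extS p (addS f f') g n = extS p f g n + extS p f' g n.
Proof.
rewrite /extS -big_split; apply: eq_bigr => i _; rewrite -big_split.
by apply: eq_bigr => j _; rewrite /addS bil_addl.
Qed.

Lemma extS_shl f g : extS p (sh f) g = sh (extS p f g).
Proof.
apply: functional_extensionality => -[|n].
  by rewrite /extS !big_ord1 /= bil_0l.
rewrite /extS /= big_ord_recr /= subnn big_ord1 /= bil_0l // addr0.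
apply: eq_bigr => i _ /=.
have Hi : (i <= n)%N by rewrite -ltnS.
rewrite big_ord_recl; under [X in _ + X = _]eq_bigr => j _ do rewrite lift0.
rewrite /= bil_0l // add0r (subSn Hi).
by apply: eq_bigr => j _; rewrite subSS.
Qed.

Lemma extS_0 f g : extS p f g 0%N = p 0%N (f 0%N) (g 0%N).
Proof. by rewrite /extS !big_ord1. Qed.

Lemma extS_cstr f (c : T) N :
  extS p f (cstS c) N = \sum_(i < N.+1) p i (f (N - i)%N) c.
Proof.
apply: eq_bigr => i _; rewrite big_ord_recr /= subnn /= big1 ?add0r // => j _.
have := ltn_ord j; case E: (N - i - j)%N => [|m] /=; first lia.
by rewrite bil_0r.
Qed.

Lemma extS_cst (a b : T) N : extS p (cstS a) (cstS b) N = p N a b.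
Proof.
rewrite extS_cstr big_ord_recr /= subnn /= big1 ?add0r // => i _.
have := ltn_ord i; case E: (N - i)%N => [|m] /=; first lia.
by rewrite bil_0l.
Qed.

End Ser.
Arguments zS {K T}.

Section Exp.
Variable K : fieldType.
Variable B : comAlgType K.
Variable X : nat -> B -> B.
Hypothesis HX : lambda_der X.
Implicit Types f g h : ser B.

Lemma X_add i x y : X i (x + y) = X i x + X i y.
Proof. by have [_ /(_ i) [H _]] := HX; rewrite -[x]scale1r H !scale1r. Qed.
Lemma X_0 i : X i 0 = 0.
Proof. by have [_ /(_ i) [H _]] := HX; have := H (-1) 1 1; rewrite !scaleN1r !addNr. Qed.
Lemma X_mul i x y : X i (x * y) = x * X i y + X i x * y.
Proof. by have [_ /(_ i) [_ H]] := HX. Qed.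
Lemma X_sum i I (r : seq I) (P : pred I) (F : I -> B) :
  X i (\sum_(j <- r | P j) F j) = \sum_(j <- r | P j) X i (F j).
Proof. exact: (big_morph _ (X_add i) (X_0 i)). Qed.
Lemma X_muln i x c : X i (x *+ c) = X i x *+ c.
Proof. by elim: c => [|c IH]; rewrite ?X_0 // !mulrS X_add IH. Qed.

Local Notation D := (actS X).

Lemma actS_add f g : D (addS f g) = addS (D f) (D g).
Proof.
apply: functional_extensionality => n; rewrite /actS /addS -big_split.
by apply: eq_bigr => i _; rewrite X_add.
Qed.

Lemma iter_add m f g : iter m D (addS f g) = addS (iter m D f) (iter m D g).
Proof. by elim: m => [|m IH] //=; rewrite IH actS_add. Qed.

Lemma actS_sh f : D (sh f) = sh (D f).
Proof.
apply: functional_extensionality => -[|n].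
  by rewrite /actS big_ord1 /= X_0.
rewrite /actS /= big_ord_recr /= subnn /= X_0 addr0.
apply: eq_bigr => i _ /=.
have Hi : (i <= n)%N by rewrite -ltnS.
by rewrite (subSn Hi).
Qed.

Lemma iter_sh m f : iter m D (sh f) = sh (iter m D f).
Proof. by elim: m => [|m IH] //=; rewrite IH actS_sh. Qed.

Lemma iter_zero m f i : (i < m)%N -> iter m D f i = 0.
Proof.
elim: m i => [|m IH] i //= Him.
rewrite /actS big1 // => j _.
case: (nat_of_ord j) (ltn_ord j) => [|j'] Hj.
  by have [-> _] := HX.
by rewrite IH ?X_0 //; lia.
Qed.

Lemma actS_mul f g n : D (mulS f g) n = mulS f (D g) n + mulS (D f) g n.
Proof.
rewrite /actS /mulS.
under eq_bigr => i _ do rewrite X_sum.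
under eq_bigr => i _ do under eq_bigr => j _ do rewrite X_mul.
under eq_bigr => i _ do rewrite big_split /=.
rewrite big_split /=; congr (_ + _).
  rewrite (SW n (fun i j => f j * X i (g (n - i - j)%N))).
  apply: eq_bigr => j _; rewrite mulr_sumr; apply: eq_bigr => i _.
  by rewrite subnAC.
rewrite (CA n (fun i j r => X i (f j) * g r)).
by apply: eq_bigr => l _; rewrite mulr_suml.
Qed.


Lemma actS_sumMn M (F : nat -> ser B) (cc : nat -> nat) n :
  D (fun k => \sum_(p < M) F p k *+ cc p) n = \sum_(p < M) D (F p) n *+ cc p.
Proof.
rewrite /actS; under eq_bigr => i _ do rewrite X_sum.
under eq_bigr => i _ do under eq_bigr => j _ do rewrite X_muln.
rewrite exchange_big; apply: eq_bigr => p _; by rewrite sumrMnl.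
Qed.

Lemma iter_mul m f g n : iter m D (mulS f g) n
  = \sum_(p < m.+1) mulS (iter p D f) (iter (m - p) D g) n *+ 'C(m, p).
Proof.
elim: m n => [|m IH] n; first by rewrite big_ord1.
have E : iter m D (mulS f g) = fun k => \sum_(p < m.+1) mulS (iter p D f) (iter (m - p) D g) k *+ 'C(m, p).
  by apply: functional_extensionality.
rewrite /= E (actS_sumMn m.+1 (fun p k => mulS (iter p D f) (iter (m - p) D g) k) (fun p => 'C(m, p))).
rewrite -(PASCAL m (fun q => mulS (iter q D f) (iter (m.+1 - q) D g) n)).
apply: eq_bigr => p _; rewrite actS_mul mulrnDl addrC subSS.
have Hp : (p <= m)%N by rewrite -ltnS.
by rewrite (subSn Hp).
Qed.

End Exp.

Section Exp2.
Variable K : fieldType.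
Hypothesis charK : [pchar K] =i pred0.
Variable B : comAlgType K.
Variable X : nat -> B -> B.
Hypothesis HX : lambda_der X.
Implicit Types f g h : ser B.
Local Notation D := (actS X).
Local Notation cf m := ((m`!%:R : K)^-1).

Lemma natK_neq0 k : (0 < k)%N -> (k%:R : K) != 0.
Proof. by move/pcharf0P: charK => ch; rewrite ch -lt0n. Qed.

Lemma FACT m p (x : B) : (p <= m)%N ->
  cf m *: (x *+ 'C(m, p)) = (cf p * cf (m - p)%N) *: x.
Proof.
move=> Hp; rewrite -scaler_nat scalerA; congr (_ *: _).
have Hb := bin_fact Hp.
have n1 := natK_neq0 (fact_gt0 p).
have n2 := natK_neq0 (fact_gt0 (m - p)).
have n3 : ('C(m, p)%:R : K) != 0 by apply: natK_neq0; rewrite bin_gt0.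
by rewrite -Hb !natrM; field; rewrite n1 n2 n3.
Qed.

Lemma expS_add f g : expS X (addS f g) = addS (expS X f) (expS X g).
Proof.
apply: functional_extensionality => n; rewrite /expS /addS -big_split.
by apply: eq_bigr => m _; rewrite iter_add // scalerDr.
Qed.

Lemma expS_sh f : expS X (sh f) = sh (expS X f).
Proof.
apply: functional_extensionality => -[|n].
  by rewrite /expS big_ord1 /= scaler0.
rewrite /expS /=; under eq_bigr => m _ do rewrite iter_sh //.
rewrite big_ord_recr /=.
have -> : D (iter n D f) n = 0 by exact: (@iter_zero _ _ _ HX n.+1).
by rewrite scaler0 addr0.
Qed.

Lemma expS_0 f : expS X f 0%N = f 0%N.
Proof. by rewrite /expS big_ord1 /= invr1 scale1r. Qed.

Lemma mulS_zero p q f g n : (n < p + q)%N -> mulS (iter p D f) (iter q D g) n = 0.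
Proof.
move=> H; rewrite /mulS big1 // => i _.
case: (ltnP i p) => Hi; first by rewrite iter_zero // mul0r.
rewrite (@iter_zero _ _ _ HX q) ?mulr0 //.
have := ltn_ord i; lia.
Qed.


Lemma expS_mul f g n : expS X (mulS f g) n = mulS (expS X f) (expS X g) n.
Proof.
pose F p q := (cf p * cf q) *: mulS (iter p D f) (iter q D g) n.
transitivity (\sum_(m < n.+1) \sum_(p < m.+1) F p (m - p)%N).
  apply: eq_bigr => m _; rewrite iter_mul // scaler_sumr.
  apply: eq_bigr => p _; rewrite FACT //.
  by rewrite -ltnS.
rewrite TR.
transitivity (\sum_(p < n.+1) \sum_(q < n.+1) F p q).
  apply: eq_bigr => p _.
  rewrite (sum_ext (a:=(n - p).+1) (b:=n.+1) (F:=F p)) //; first by rewrite ltnS leq_subr.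
  move=> q Hq; rewrite /F mulS_zero ?scaler0 //.
  have := ltn_ord p; lia.
rewrite /mulS /expS.
transitivity (\sum_(i < n.+1) (\sum_(p < n.+1) cf p *: iter p D f i) *
               (\sum_(q < n.+1) cf q *: iter q D g (n - i)%N)); last first.
  apply: eq_bigr => i _; congr (_ * _).
    rewrite (sum_ext (a:=i.+1) (b:=n.+1) (F:=fun p => cf p *: iter p D f i)) //.
    by move=> p Hp; rewrite iter_zero ?scaler0.
  rewrite (sum_ext (a:=(n - i).+1) (b:=n.+1) (F:=fun p => cf p *: iter p D g (n - i)%N)) //.
    by rewrite ltnS leq_subr.
  by move=> p Hp; rewrite iter_zero ?scaler0.
under [RHS]eq_bigr => i _ do rewrite mulr_suml.
under [RHS]eq_bigr => i _ do under eq_bigr => p _ do rewrite mulr_sumr.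
rewrite [RHS]exchange_big; apply: eq_bigr => p _.
rewrite [RHS]exchange_big; apply: eq_bigr => q _.
rewrite /F scaler_sumr; apply: eq_bigr => i _.
by rewrite -scalerAl -scalerAr scalerA.
Qed.

End Exp2.

Section Psi.
Variable K : fieldType.
Hypothesis charK : [pchar K] =i pred0.
Variable B : comAlgType K.
Variable X : nat -> B -> B.
Hypothesis HX : lambda_der X.
Variable Phiinv : ser B -> ser B.
Hypothesis HPhiinv1 : forall f, Phiinv (expS X f) = f.
Hypothesis HPhiinv2 : forall f, expS X (Phiinv f) = f.
Implicit Types f g h : ser B.

Lemma Psi_add f g : Phiinv (addS f g) = addS (Phiinv f) (Phiinv g).
Proof. by rewrite -{1}(HPhiinv2 f) -{1}(HPhiinv2 g) -(expS_add HX) HPhiinv1. Qed.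
Lemma Psi_sh f : Phiinv (sh f) = sh (Phiinv f).
Proof. by rewrite -{1}(HPhiinv2 f) -(expS_sh HX) HPhiinv1. Qed.
Lemma Psi_0 f : Phiinv f 0%N = f 0%N.
Proof. by rewrite -{2}(HPhiinv2 f) (expS_0 X). Qed.
Lemma expS_mulF f g : expS X (mulS f g) = mulS (expS X f) (expS X g).
Proof. by apply: functional_extensionality => n; rewrite (expS_mul charK HX). Qed.
Lemma Psi_mul f g : Phiinv (mulS f g) = mulS (Phiinv f) (Phiinv g).
Proof. by rewrite -{1}(HPhiinv2 f) -{1}(HPhiinv2 g) -expS_mulF HPhiinv1. Qed.
Lemma expS_z : expS X (@zS _ B) = zS.
Proof.
have E : addS (@zS _ B) zS = zS by apply: functional_extensionality => n; rewrite /addS addr0.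
apply: functional_extensionality => n.
have := congr1 (fun s => s n) (expS_add HX zS zS); rewrite E /addS => H.
by apply: (@addrI _ (expS X zS n)); rewrite -H addr0.
Qed.
Lemma Psi_z : Phiinv zS = zS.
Proof. by rewrite -{1}expS_z HPhiinv1. Qed.
Lemma Psi_opp f : Phiinv (oppS f) = oppS (Phiinv f).
Proof.
have E : addS f (oppS f) = zS by apply: functional_extensionality => n; rewrite /addS /oppS subrr.
apply: functional_extensionality => n.
have := congr1 (fun s => s n) (Psi_add f (oppS f)); rewrite E Psi_z /addS /zS /oppS => H.
by apply: (@addrI _ (Phiinv f n)); rewrite -H subrr.
Qed.

Variable sigma : nat -> B -> B -> B.
Hypothesis Hsb : forall n, bilinearK (sigma n).
Variable h : ser B.
Definition Gf f := Phiinv (extS sigma (expS X f) (expS X h)).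

Lemma G_add f g : Gf (addS f g) = addS (Gf f) (Gf g).
Proof.
rewrite /Gf (expS_add HX) -Psi_add; congr Phiinv.
by apply: functional_extensionality => n; rewrite (extS_addl Hsb).
Qed.
Lemma G_sh f : Gf (sh f) = sh (Gf f).
Proof. by rewrite /Gf (expS_sh HX) (extS_shl Hsb) Psi_sh. Qed.

Lemma DEC N f : Gf f N = \sum_(i < N.+1) Gf (cstS (f (N - i)%N)) i.
Proof.
elim: N f => [|N IH] f.
  by rewrite big_ord1 {1}(ser_dec f) G_add /addS G_sh /= addr0.
rewrite {1}(ser_dec f) G_add /addS G_sh /= IH [RHS]big_ord_recr /= subnn [RHS]addrC.
congr (_ + _); apply: eq_bigr => i _ /=.
have Hi : (i <= N)%N by rewrite -ltnS.
by rewrite /tl (subSn Hi).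
Qed.
End Psi.

Unset Implicit Arguments. Unset Strict Implicit.

Theorem lemma3p5 (K : fieldType) (charK : [pchar K] =i pred0)
  (A B : comAlgType K) (pi0 : A -> A -> A) (sigma0 : B -> B -> B)
  (Hpi0 : is_poisson pi0) (Hsigma0 : is_poisson sigma0)
  (phi0 : {lrmorphism A -> B})
  (Hphi0 : forall a b, phi0 (pi0 a b) = sigma0 (phi0 a) (phi0 b))
  (pi : nat -> A -> A -> A) (sigma : nat -> B -> B -> B)
  (Hpi : formal_poisson_deformation pi0 pi)
  (Hsigma : formal_poisson_deformation sigma0 sigma)
  (k : nat) (X : nat -> B -> B) (HX : lambda_der X)
  (Phiinv : ser B -> ser B)
  (HPhiinv1 : forall f, Phiinv (expS X f) = f)
  (HPhiinv2 : forall f, expS X (Phiinv f) = f)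
  (R : A -> A -> B) (HR : bilinearK R)
  (Hexp : forall a1 a2 n, (n <= k.+1)%N ->
     Phiinv (extS sigma (expS X (cstS (phi0 a1))) (expS X (cstS (phi0 a2)))) n
     = phi0 (pi n a1 a2) + (if n == k.+1 then R a1 a2 else 0)) :
  CE_der_2cocycle pi0 sigma0 phi0 R.
Proof.
have [Hpi0eq Hpib Hpia Hpil Hpij] := Hpi.
have [Hs0eq Hsb Hsa Hsl Hsj] := Hsigma.
have [Hp0b Hp0a _ _] := Hpi0.
have [Hs0b Hs0a _ _] := Hsigma0.
pose sp a b := Phiinv (extS sigma (expS X (cstS (phi0 a))) (expS X (cstS (phi0 b)))).
have pi_anti N a b : pi N a b = - pi N b a.
  by have := Hpia (cstS a) (cstS b) N; rewrite !(extS_cst Hpib).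
have pi_leib N a a' b : pi N (a * a') b = a * pi N a' b + pi N a b * a'.
  have := Hpil (cstS a) (cstS a') (cstS b) N.
  by rewrite mulS_cst (extS_cst Hpib) mulS_cstl mulS_cstr !(extS_cst Hpib).
have spA a b : sp a b = oppS (sp b a).
  rewrite /sp -(Psi_opp HX HPhiinv1 HPhiinv2); congr Phiinv.
  by apply: functional_extensionality => n; rewrite Hsa.
have spL a a' b : sp (a * a') b
    = addS (mulS (cstS (phi0 a)) (sp a' b)) (mulS (sp a b) (cstS (phi0 a'))).
  rewrite /sp rmorphM -mulS_cst (expS_mulF charK HX).
  rewrite -(HPhiinv1 (cstS (phi0 a))) -(HPhiinv1 (cstS (phi0 a'))).
  rewrite -!(Psi_mul charK HX HPhiinv1 HPhiinv2) -(Psi_add HX HPhiinv1 HPhiinv2).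
  rewrite !HPhiinv2; congr Phiinv.
  by apply: functional_extensionality => n; rewrite Hsl.
have Ranti a b : R a b = - R b a.
  have := congr1 (fun s => s k.+1) (spA a b); rewrite /oppS /sp /= !Hexp // eqxx.
  rewrite (pi_anti _ a b) rmorphN => H.
  by apply: (@addrI _ (- phi0 (pi k.+1 b a))); rewrite H opprD.
have RL a a' b : R (a * a') b = phi0 a * R a' b + R a b * phi0 a'.
  have := congr1 (fun s => s k.+1) (spL a a' b); rewrite /addS /= mulS_cstl mulS_cstr /sp.
  rewrite !Hexp // eqxx pi_leib rmorphD !rmorphM => H.
  apply: (@addrI _ (phi0 a * phi0 (pi k.+1 a' b) + phi0 (pi k.+1 a b) * phi0 a')).
  by rewrite H; ring.
split.
  split => //.
  by move=> a a' b; rewrite Ranti RL (Ranti b a') (Ranti b a); ring.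
move=> a0 a1 a2.
pose G c f := Gf X Phiinv sigma (cstS (phi0 c)) f.
have TERM a b c (i : nat) : (i < k.+2)%N ->
    G c (cstS (sp a b (k.+1 - i)%N)) i
    = phi0 (pi i (pi (k.+1 - i)%N a b) c) + (if i == 0%N then sigma0 (R a b) (phi0 c) else 0)
      + (if i == k.+1 then R (pi0 a b) c else 0).
  case: i => [|i] Hi.
    rewrite subn0 /G /sp Hexp // eqxx /Gf (Psi_0 HPhiinv2) (extS_0) !(expS_0 X) /=.
    by rewrite Hs0eq (bil_addl Hs0b) Hpi0eq Hphi0 addr0.
  have HNi : (k.+1 - i.+1 <= k)%N by rewrite subSS leq_subr.
  rewrite /sp Hexp; last by apply: (leq_trans HNi).
  have -> : (k.+1 - i.+1 == k.+1)%N = false by apply/negbTE; rewrite neq_ltn ltnS HNi.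
  rewrite addr0 /G /Gf Hexp // /=.
  rewrite addr0; case: eqP => [E|] //.
  by rewrite -E subnn Hpi0eq.
have S a b c : G c (sp a b) k.+1
    = phi0 (\sum_(i < k.+2) pi i (pi (k.+1 - i)%N a b) c) + sigma0 (R a b) (phi0 c) + R (pi0 a b) c.
  rewrite /G (DEC HX HPhiinv1 HPhiinv2 Hsb).
  under eq_bigr => i _ do rewrite -/(G c _) TERM //.
  rewrite !big_split /= rmorph_sum; congr (_ + _ + _).
    by rewrite big_ord_recl /= big1 ?addr0 // => i _; rewrite lift0.
  by rewrite big_ord_recr /= eqxx big1 ?add0r // => i _; rewrite ltn_eqF.
have J : G a2 (sp a0 a1) k.+1 + G a0 (sp a1 a2) k.+1 + G a1 (sp a2 a0) k.+1 = 0.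
  pose F c := expS X (cstS (phi0 c)).
  have E : addS (addS (extS sigma (extS sigma (F a0) (F a1)) (F a2))
                      (extS sigma (extS sigma (F a1) (F a2)) (F a0)))
                (extS sigma (extS sigma (F a2) (F a0)) (F a1)) = zS.
    by apply: functional_extensionality => n; rewrite /addS Hsj.
  have := congr1 (fun s => Phiinv s k.+1) E.
  rewrite (Psi_z HX HPhiinv1) !(Psi_add HX HPhiinv1 HPhiinv2) /addS /zS => <-.
  by rewrite /G /Gf /sp !HPhiinv2.
have extS_cstF a b : extS pi (cstS a) (cstS b) = fun n => pi n a b.
  by apply: functional_extensionality => n; rewrite (extS_cst Hpib).
have PJ : phi0 (\sum_(i < k.+2) pi i (pi (k.+1 - i)%N a0 a1) a2)
        + phi0 (\sum_(i < k.+2) pi i (pi (k.+1 - i)%N a1 a2) a0)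
        + phi0 (\sum_(i < k.+2) pi i (pi (k.+1 - i)%N a2 a0) a1) = 0.
  have := Hpij (cstS a0) (cstS a1) (cstS a2) k.+1.
  rewrite !(extS_cstr Hpib) !extS_cstF => H.
  by rewrite -!rmorphD H rmorph0.
rewrite !S in J.
have key : forall j0 j1 j2 s0 s1 s2 r0 r1 r2 : B,
    j0 + s0 + r0 + (j1 + s1 + r1) + (j2 + s2 + r2) = 0 -> j0 + j1 + j2 = 0 ->
    - s1 - - - s2 + - s0 - r0 + - r2 - r1 = 0.
  move=> j0 j1 j2 s0 s1 s2 r0 r1 r2 H1 H2.
  have -> : - s1 - - - s2 + - s0 - r0 + - r2 - r1
      = - (j0 + s0 + r0 + (j1 + s1 + r1) + (j2 + s2 + r2)) + (j0 + j1 + j2) by ring.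
  by rewrite H1 H2 oppr0 addr0.
rewrite /CE_delta2 (Hs0a (phi0 a0)) (Ranti a0 a2) (bil_Nr Hs0b) (Hs0a (phi0 a1)).
rewrite (Hs0a (phi0 a2)) (Hp0a a0 a2) (bil_Nl HR).
exact: (key _ _ _ _ _ _ _ _ _ J PJ).
Qed.
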